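(* Let $n\ge 1$ and $m\ge 2$ be integers with $m\nmid n$, and let $\ell=\lfloor n/m\rfloor$. Then the algebraic degree of $\theta_{m,k}$ is $(m-1)k+1$ for every $1\le k\le \ell$. In particular, the maps $\theta_{m,0},\theta_{m,1},\dots,\theta_{m,\ell}$ are linearly independent over $\mathbb{F}_2$ (as elements of the $\mathbb{F}_2$-vector space of all maps $\mathbb{F}_2^n\to\mathbb{F}_2^n$ under pointwise addition), and hence $\Theta_{n,m}=\{\sum_{k=0}^{\ell}a_k\theta_{m,k}: a_k\in\mathbb{F}_2\}$ is an $\mathbb{F}_2$-vector space of dimension $\ell+1$.
   Context: For $x=(x_0,\dots,x_{n-1})\in\mathbb{F}_2^n$, indices of coordinates are taken modulo $n$. For a nonnegative integer $k$, the map $\theta_{m,k}\colon\mathbb{F}_2^n\to\mathbb{F}_2^n$ is defined by $\theta_{m,k}(x)=y$ with $y_i=x_{i+mk}\prod_{1\le j\le mk-1,\ m\nmid j}(x_{i+j}+1)$ for $i\in\{0,\dots,n-1\}$ (for $k=0$ the empty product is $1$, so $\theta_{m,0}$ is the identity map). The algebraic degree of a map $\mathbb{F}_2^n\to\mathbb{F}_2^n$ is the maximum of the degrees of the algebraic normal forms of its coordinate functions. *)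

(* Defs.v *)
From HB Require Import structures.
From mathcomp Require Import all_boot all_order all_algebra.
Set Implicit Arguments. Unset Strict Implicit. Unset Printing Implicit Defensive.
Import GRing.Theory.
Local Open Scope ring_scope.

Notation F2 := 'F_2.
Notation BV n := 'rV[F2]_n.

(* x_k with index k taken modulo n (n >= 1 in all uses; 0 if n = 0). *)
Definition coord (n : nat) (x : BV n) (k : nat) : F2 :=
  odflt 0 (omap (x ord0) (insub (k %% n)%N : option 'I_n)).

Definition theta (n m k : nat) (x : BV n) : BV n :=
  \row_(i < n) (coord x (i + m * k)%N *
     \prod_(1 <= j < m * k | ~~ (m %| j)%N) (coord x (i + j)%N + 1)).

(* Algebraic normal form of a Boolean function f : F_2^n -> F_2:
   f(x) = sum_{S subset [n]} a_S prod_{i in S} x_i, with the coefficients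
   given by the Moebius transform a_S = sum_{supp(x) subset S} f(x). *)
Definition supp (n : nat) (x : BV n) : {set 'I_n} := [set i | x ord0 i != 0].

Definition anf_coef (n : nat) (f : BV n -> F2) (S : {set 'I_n}) : F2 :=
  \sum_(x : BV n | supp x \subset S) f x.

(* degree of the ANF of f (0 for the zero function) *)
Definition anf_deg (n : nat) (f : BV n -> F2) : nat :=
  \max_(S : {set 'I_n} | anf_coef f S != 0) #|S|.

Definition alg_deg (n : nat) (F : BV n -> BV n) : nat :=
  \max_(i < n) anf_deg (fun x => F x ord0 i).

Definition Theta (n m : nat) : {vspace {ffun BV n -> BV n}} :=
  <<[seq [ffun x => theta m k x] | k <- iota 0 (n %/ m).+1]>>%VS.

(* Main.v *)
Require Import Defs.
From HB Require Import structures.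
From mathcomp Require Import all_boot all_order all_algebra.
Import GRing.Theory.
Local Open Scope ring_scope.
Set Implicit Arguments. Unset Strict Implicit.
Lemma F2_cases (y : F2) : y = 0 \/ y = 1.
Proof. case: y => [[|[|//]]] /= Hy; [left|right]; exact/val_inj. Qed.
Lemma F2_addxx (y : F2) : y + y = 0.
Proof. by case: (F2_cases y) => ->; apply/val_inj. Qed.
Lemma F2_add1 (y : F2) : (y + 1 != 0) = (y == 0).
Proof. by case: (F2_cases y) => ->. Qed.

Definition ev (N : nat) (c : 'I_N) : BV N := delta_mx ord0 c.

Lemma evE N (x : BV N) c j : (x + ev c) ord0 j = x ord0 j + (j == c)%:R.
Proof. by rewrite !mxE eqxx. Qed.

Lemma supp_shift N (S : {set 'I_N}) c (x : BV N) : c \in S ->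
  (supp (x + ev c) \subset S) = (supp x \subset S).
Proof.
move=> cS.
suff H : forall y : BV N, supp y \subset S -> supp (y + ev c) \subset S.
  apply/idP/idP; last exact: H.
  move=> /H; suff -> : x + ev c + ev c = x by [].
  by apply/matrixP => i j; rewrite !mxE -addrA F2_addxx addr0.
move=> y /subsetP yS; apply/subsetP => j; rewrite inE evE.
case: (eqVneq j c) => [-> //|jc]; rewrite addr0 => h; apply: yS; by rewrite inE.
Qed.

Lemma anf_coef_shift N (f : BV N -> F2) (S : {set 'I_N}) c : c \in S ->
  (forall x, f (x + ev c) = f x) -> anf_coef f S = 0.
Proof.
move=> cS hf; rewrite /anf_coef (bigID (fun x : BV N => x ord0 c == 0)) /=.
rewrite [X in _ + X](reindex_inj (addIr (ev c))) /=.
under [X in _ + X]eq_bigl => x do rewrite supp_shift // evE eqxx F2_add1.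
under [X in _ + X]eq_bigr => x _ do rewrite hf.
exact: F2_addxx.
Qed.

Section Form.
Variables (N : nat) (a : 'I_N) (B : {set 'I_N}) (f : BV N -> F2).
Hypothesis hf : forall x, f x = x ord0 a * \prod_(b in B) (x ord0 b + 1).

Lemma form_sub S : anf_coef f S != 0 -> S \subset a |: B.
Proof.
move=> h; apply/subsetP => c cS; apply/contraR: h => caB; apply/eqP.
apply: (anf_coef_shift cS) => x; rewrite !hf evE.
have ca : (a == c) = false by apply/negbTE; apply: contraNneq caB => ->; rewrite setU11.
rewrite ca addr0; congr (_ * _); apply: eq_bigr => b bB; rewrite evE.
have -> : (b == c) = false.
  by apply/negbTE; apply: contraNneq caB => <-; rewrite setU1r.
by rewrite addr0.
Qed.

Hypothesis aB : a \notin B.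

Lemma form_top : anf_coef f (a |: B) = 1.
Proof.
rewrite /anf_coef (bigD1 (ev a)) /=; last first.
  apply/subsetP => j; rewrite inE mxE eqxx /=; case: (eqVneq j a) => [->|] //.
  by rewrite setU11.
rewrite big1 ?addr0.
  rewrite hf mxE !eqxx /= big1 ?mulr1 // => b bB; rewrite mxE /=.
  have -> : (b == a) = false by apply/negbTE; apply: contraNneq aB => <-.
  by rewrite add0r.
move=> x /andP [/subsetP xS xa]; rewrite hf.
case: (F2_cases (x ord0 a)) => [->|xa1]; first by rewrite mul0r.
case: (boolP [exists b in B, x ord0 b != 0]).
  move=> /exists_inP [b bB xb]; rewrite (bigD1 b) //=.
  case: (F2_cases (x ord0 b)) xb => [->|->] //= _.
  by rewrite F2_addxx mul0r mulr0.
move=> /exists_inP hB; exfalso; move/eqP: xa; apply.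
apply/matrixP => i j; rewrite (ord1 i) mxE eqxx /=.
case: (eqVneq j a) => [->|ja] //=.
apply/eqP; apply: contraR ja => xj.
have: j \in a |: B by apply: xS; rewrite inE.
case/setU1P => [->//|jB]; exfalso; apply: hB; by exists j.
Qed.

Lemma form_deg : anf_deg f = #|B|.+1.
Proof.
apply/eqP; rewrite eqn_leq; apply/andP; split.
  apply/bigmax_leqP => S /form_sub/subset_leq_card; by rewrite cardsU1 aB.
have := cardsU1 a B; rewrite aB add1n => <-.
by apply: leq_bigmax_cond; rewrite form_top oner_neq0.
Qed.
End Form.
From mathcomp Require Import zify.

Lemma cnt (m k : nat) : (0 < m)%N ->
  (\sum_(0 <= j < m * k | ~~ (m %| j)) 1 = (m - 1) * k)%N.
Proof.
move=> m0; elim: k => [|k IH]; first by rewrite !muln0 big_geq.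
rewrite mulnS addnC (@big_cat_nat _ _ _ (m * k) 0 _ _ _ (leq0n _) (leq_addr _ _)) /= IH.
have lt1 : (m * k < m * k + m)%N by lia.
rewrite big_ltn_cond // dvdn_mulr // big_nat_cond.
rewrite (eq_bigl (fun j => (m * k < j < m * k + m)%N && true)); last first.
  move=> j /=; rewrite andbT; case hj: (m * k < j < m * k + m)%N => //=.
  have -> : j = (m * k + (j - m * k))%N by lia.
  rewrite dvdn_addr ?dvdn_mulr //; apply/negP => /dvdn_leq; lia.
rewrite /= -big_nat_cond sum_nat_const_nat; lia.
Qed.

Lemma cardA (m k : nat) : (0 < m)%N ->
  #|[pred j : 'I_(m * k) | ~~ (m %| j)%N]| = ((m - 1) * k)%N.
Proof.
move=> m0; rewrite -sum1_card -(cnt k m0) big_mkord; apply: eq_bigl => j.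
by rewrite !inE.
Qed.

Section Theta.
Variables (n m : nat) (hn : (0 < n)%N) (hm : (0 < m)%N).

Definition om (t : nat) : 'I_n := Ordinal (ltn_pmod t hn).

Lemma coordE (x : BV n) t : Defs.coord x t = x ord0 (om t).
Proof.
rewrite /Defs.coord; have := @insubP _ _ 'I_n (t %% n)%N; case: insub => [j|] /= h; inversion h.
  by congr (x _ _); apply/val_inj => /=; rewrite H1.
match goal with H : is_true (~~ _) |- _ => by rewrite ltn_pmod in H end.
Qed.

Definition Aset k := [pred j : 'I_(m * k) | ~~ (m %| j)%N].
Definition Bset (i : nat) k := [set om (i + j) | j : 'I_(m * k) in Aset k].

Variables (k : nat) (hk : (m * k < n)%N) (i : 'I_n).

Lemma om_inj : {in Aset k &, injective (fun j : 'I_(m * k) => om (i + j))}.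
Proof.
move=> j1 j2 _ _ /(congr1 val) /= /eqP; rewrite eqn_modDl !modn_small.
- by move/eqP/val_inj.
- exact: ltn_trans (ltn_ord j2) hk.
- exact: ltn_trans (ltn_ord j1) hk.
Qed.

Lemma aB : om (i + m * k) \notin Bset i k.
Proof.
apply/imsetP => [[j _ /(congr1 val) /= /eqP]]; rewrite eqn_modDl !modn_small //.
- by move/eqP => h; move: (ltn_ord j); rewrite -h ltnn.
- exact: ltn_trans (ltn_ord j) hk.
Qed.

Lemma cardB : #|Bset i k| = ((m - 1) * k)%N.
Proof. by rewrite card_in_imset ?cardA //; exact: om_inj. Qed.

Lemma thetaE (x : BV n) : theta m k x ord0 i =
  x ord0 (om (i + m * k)) * \prod_(b in Bset i k) (x ord0 b + 1).
Proof.
rewrite mxE coordE big_imset /=; last exact: om_inj.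
congr (_ * _).
have -> : \prod_(1 <= j < m * k | ~~ (m %| j)%N) (Defs.coord x (i + j) + 1) =
          \prod_(0 <= j < m * k | ~~ (m %| j)%N) (Defs.coord x (i + j) + 1).
  case: (posnP (m * k)) => [->|mk0]; first by rewrite !big_geq.
  by rewrite [in RHS]big_ltn_cond // dvdn0.
rewrite big_mkord; apply: eq_big => j; first by rewrite !inE.
by rewrite coordE.
Qed.

Lemma theta_deg : anf_deg (fun x => theta m k x ord0 i) = ((m - 1) * k).+1.
Proof. rewrite -cardB; apply: form_deg; [exact: thetaE | exact: aB]. Qed.

Lemma theta_top : exists S : {set 'I_n},
  #|S| = ((m - 1) * k).+1 /\ anf_coef (fun x => theta m k x ord0 i) S = 1.
Proof.
exists (om (i + m * k) |: Bset i k); split.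
  by rewrite cardsU1 aB cardB.
apply: form_top; [exact: thetaE | exact: aB].
Qed.

Lemma theta_small S : anf_coef (fun x => theta m k x ord0 i) S != 0 ->
  (#|S| <= ((m - 1) * k).+1)%N.
Proof.
move=> /(form_sub (thetaE)) /subset_leq_card; by rewrite cardsU1 aB cardB.
Qed.
End Theta.
Lemma mk_lt (n m k : nat) : (1 <= n)%N -> (2 <= m)%N -> ~~ (m %| n)%N ->
  (k <= n %/ m)%N -> (m * k < n)%N.
Proof.
move=> hn hm hnd hk.
have h1 : (m * k <= m * (n %/ m))%N by rewrite leq_mul2l hk orbT.
have h2 := divn_eq n m.
have h3 : (n %% m != 0)%N by rewrite -/(dvdn m n).
lia.
Qed.

Lemma indep (n m : nat) (hn : (1 <= n)%N) (hm : (2 <= m)%N)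
  (hnd : ~~ (m %| n)%N) (l : nat) (hl : l = (n %/ m)%N) (a : nat -> F2) :
  (forall x : BV n, \sum_(k < l.+1) a k *: @theta n m k x = 0) ->
  forall k : nat, (k <= l)%N -> a k = 0.
Proof.
move=> hsum.
have m0 : (0 < m)%N by lia.
pose i0 : 'I_n := Ordinal hn.
have hmk : forall k, (k <= l)%N -> (m * k < n)%N.
  by move=> k hk; apply: mk_lt => //; rewrite -hl.
have lin : forall S, \sum_(j < l.+1) a j * anf_coef (fun x => theta m j x ord0 i0) S = 0.
  move=> S; rewrite /anf_coef.
  under eq_bigr do rewrite mulr_sumr.
  rewrite exchange_big /=; apply: big1 => x _.
  move: (hsum x) => /(congr1 (fun M : BV n => M ord0 i0)); rewrite summxE mxE => h.
  by rewrite -[RHS]h; apply: eq_bigr => j _; rewrite [RHS]mxE.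
have step : forall k, (k <= l)%N -> (forall j, (k < j <= l)%N -> a j = 0) -> a k = 0.
  move=> k hk hj.
  have [S [cS tS]] := theta_top hn m0 (hmk k hk) i0.
  have := lin S; rewrite (bigD1 (Ordinal (hk : (k < l.+1)%N))) //= tS mulr1.
  rewrite big1 ?addr0 // => j /eqP jk.
  case: (ltngtP j k) => [jk'|jk'|jk']; last by exfalso; apply: jk; apply: val_inj.
  - case: (eqVneq (anf_coef (fun x => theta m j x ord0 i0) S) 0) => [->|hne].
      by rewrite mulr0.
    have := theta_small hn m0 (hmk j (ltnW (leq_trans jk' hk))) hne.
    rewrite cS ltnS leq_mul2l; have -> : (m - 1 == 0)%N = false by lia.
    by rewrite /= leqNgt jk'.
  - by rewrite hj ?mul0r // jk' -ltnS ltn_ord.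
have key : forall d k, (l - k <= d)%N -> (k <= l)%N -> a k = 0.
  elim=> [|d IH] k hd hk; apply: step => // j /andP [hkj hjl].
    lia.
  by apply: IH => //; lia.
by move=> k hk; apply: (key (l - k)%N).
Qed.

Theorem lemma2 (n m : nat) (hn : (1 <= n)%N) (hm : (2 <= m)%N)
  (hnd : ~~ (m %| n)%N) :
  let l := (n %/ m)%N in
  [/\ (forall k : nat, (1 <= k <= l)%N ->
         alg_deg (@theta n m k) = ((m - 1) * k + 1)%N),
      (forall a : nat -> F2,
         (forall x : BV n, \sum_(k < l.+1) a k *: @theta n m k x = 0) ->
         forall k : nat, (k <= l)%N -> a k = 0)
    & \dim (Theta n m) = l.+1].
Proof.
have m0 : (0 < m)%N by lia.
move=> l; have hl : l = (n %/ m)%N by [].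
clearbody l.
have ind := indep hn hm hnd hl.
split => //.
  move=> k /andP [_ hk]; have hmk : (m * k < n)%N by apply: mk_lt => //; rewrite -hl.
  rewrite /alg_deg; under eq_bigr => i _ do rewrite (theta_deg hn m0 hmk i).
  apply/eqP; rewrite eqn_leq addn1; apply/andP; split.
    by apply/bigmax_leqP.
  exact: (leq_bigmax_cond (Ordinal hn)).
rewrite /Theta -hl.
set X := [seq _ | k <- _].
have sX : size X = l.+1 by rewrite size_map size_iota.
suff fX : free (in_tuple X) by rewrite -sX; exact/eqP.
apply/freeP => c hc i.
pose a (j : nat) : F2 := odflt 0 (omap c (insub j)).
have ai : forall j : 'I_(size X), a j = c j by move=> j; rewrite /a valK.
rewrite -ai; apply: (ind a); last by rewrite -ltnS -sX ltn_ord.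
move=> x.
have := congr1 (fun g : {ffun BV n -> BV n} => g x) hc.
rewrite sum_ffunE ffunE => h; rewrite -[RHS]h.
rewrite -(big_mkord xpredT (fun k => a k *: theta m k x)) -sX big_mkord.
apply: eq_bigr => j _; have hj : (j < l.+1)%N by rewrite -sX.
by rewrite ffunE ai /X (nth_map 0%N) ?size_iota // nth_iota // ffunE.
Qed.
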